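(* Let $\mu>1$ be a real number and $N\ge 1$ an integer. Let $a(1),a(2),\dots$ be a sequence of real numbers such that $a(n+m)\le a(n)+a(m)$ holds for all integers $n,m$ with $N\le n\le m\le \mu n$. Then $\lim_{n\to\infty} a(n)/n$ exists (possibly $-\infty$) and equals $\inf_{k\ge N} a(k)/k$. *)

(* Defs.v *)
From Stdlib Require Import Reals Lra Lia.
Open Scope R_scope.

Definition is_inf_ratio (a : nat -> R) (N : nat) (L : R) : Prop :=
  (forall k : nat, (N <= k)%nat -> L <= a k / INR k) /\
  (forall l : R, (forall k : nat, (N <= k)%nat -> l <= a k / INR k) -> l <= L).

Definition inf_ratio_minus_infty (a : nat -> R) (N : nat) : Prop :=
  forall l : R, exists k : nat, (N <= k)%nat /\ a k / INR k < l.

(* Main.v *)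
Require Import Defs.
From Stdlib Require Import Reals Lra Lia Classical.
Open Scope R_scope.

Definition SUB (mu:R) (N:nat) (a:nat->R) := forall n m : nat, (N <= n)%nat -> (n <= m)%nat -> INR m <= mu * INR n ->
            a (n + m)%nat <= a n + a m.

Lemma pow2_ge1 u : (1 <= 2^u)%nat.
Proof. induction u; simpl; lia. Qed.

Lemma pow2_gt u : (u < 2^u)%nat.
Proof. induction u; simpl; lia. Qed.

Lemma INR_pow2k u k : INR (2^u * k) = 2^u * INR k.
Proof. rewrite mult_INR, pow_INR. simpl (INR 2). replace (1+1) with 2 by ring. reflexivity. Qed.

Lemma doubling mu N a (hmu : 1 < mu) (hs : SUB mu N a) k (hk : (N <= k)%nat) :
  forall u, a (2^u * k)%nat <= 2^u * a k.
Proof.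
  induction u.
  - simpl. replace (k+0)%nat with k by lia. lra.
  - replace (2^S u * k)%nat with (2^u*k + 2^u*k)%nat by (rewrite Nat.pow_succ_r'; ring).
    pose proof (pow2_ge1 u).
    assert (hN: (N <= 2^u*k)%nat) by nia.
    assert (h := hs (2^u*k)%nat (2^u*k)%nat hN (le_n _)).
    assert (h0 := pos_INR (2^u*k)).
    simpl pow. nra.
Qed.

Lemma pow2_bracket m0 (hm0 : (1 <= m0)%nat) : forall n, (m0 <= n)%nat -> exists s, (2^s*m0 <= n < 2*(2^s*m0))%nat.
Proof.
  intro n. induction n as [n IH] using (well_founded_induction Wf_nat.lt_wf). intro hn.
  destruct (Nat.lt_ge_cases n (2*m0)) as [h|h].
  - exists 0%nat. simpl. lia.
  - destruct (IH (n/2)%nat) as [s hs].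
    + apply Nat.div_lt; lia.
    + apply Nat.div_le_lower_bound; lia.
    + exists (S s). pose proof (Nat.div_mod n 2). pose proof (Nat.mod_upper_bound n 2).
      replace (2^S s * m0)%nat with (2*(2^s*m0))%nat by (rewrite Nat.pow_succ_r'; ring).
      set (X := (2^s*m0)%nat) in *. set (q := (n/2)%nat) in *. lia.
Qed.

Lemma sum_ge_term (f : nat -> R) (hf : forall j, 0 <= f j) : forall M j, (j <= M)%nat -> f j <= sum_f_R0 f M.
Proof.
  induction M; intros j hj.
  - replace j with 0%nat by lia. simpl. lra.
  - simpl. destruct (Nat.eq_dec j (S M)) as [e|e].
    + subst. assert (0 <= sum_f_R0 f M). { specialize (IHM 0%nat ltac:(lia)). specialize (hf 0%nat). lra. } lra.
    + specialize (IHM j ltac:(lia)). specialize (hf (S M)). lra.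
Qed.

Lemma nat_above (x : R) : exists n : nat, (1 <= n)%nat /\ x <= INR n.
Proof.
  destruct (INR_unbounded x) as [n hn]. exists (S n). split; [lia|]. rewrite S_INR. lra.
Qed.

Lemma crude mu N a (hmu : 1 < mu) (hN : (1 <= N)%nat) (hs : SUB mu N a) :
  exists C, 0 <= C /\ forall m, (N <= m)%nat -> a m <= C * INR m.
Proof.
  destruct (nat_above (/(mu-1))) as [K [hK1 hK]].
  assert (hK' : 1 <= INR K * (mu - 1)).
  { apply Rmult_le_compat_r with (r := mu-1) in hK; [|lra]. rewrite Rinv_l in hK; lra. }
  set (M0 := (2*N + 2*K)%nat).
  set (SS := sum_f_R0 (fun j => Rabs (a j)) M0).
  assert (hSt : forall j, (j <= M0)%nat -> Rabs (a j) <= SS).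
  { intros j hj. apply (sum_ge_term (fun j => Rabs (a j))); auto. intro; apply Rabs_pos. }
  assert (hS0 : 0 <= SS). { specialize (hSt 0%nat ltac:(lia)). pose proof (Rabs_pos (a 0%nat)). lra. }
  exists SS. split; auto.
  intro m. induction m as [m IH] using (well_founded_induction Wf_nat.lt_wf). intro hm.
  destruct (Nat.lt_ge_cases m M0) as [h|h].
  - assert (1 <= INR m) by (apply (le_INR 1); lia).
    specialize (hSt m ltac:(lia)). pose proof (Rle_abs (a m)). nra.
  - assert (exists h, m = (h + h)%nat \/ m = (h + S h)%nat) as [hh Hh].
    { exists (m/2)%nat. pose proof (Nat.div_mod m 2). pose proof (Nat.mod_upper_bound m 2). lia. }
    assert (hge : (N + K <= hh)%nat) by (unfold M0 in h; lia).
    set (m2 := (m - hh)%nat).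
    assert (hm2 : (hh <= m2 <= hh + 1)%nat) by (unfold m2; lia).
    assert (hmm : m = (hh + m2)%nat) by (unfold m2; lia).
    assert (hKh : INR K <= INR hh) by (apply le_INR; lia).
    assert (hr : INR m2 <= mu * INR hh).
    { assert (INR m2 <= INR hh + 1) by (rewrite <- S_INR; apply le_INR; lia). nra. }
    assert (hsub := hs hh m2 ltac:(lia) ltac:(lia) hr).
    rewrite <- hmm in hsub.
    assert (I1 := IH hh ltac:(lia) ltac:(lia)).
    assert (I2 := IH m2 ltac:(lia) ltac:(lia)).
    rewrite hmm at 2. rewrite plus_INR. lra.
Qed.

Lemma chain mu N a (hmu : 1 < mu) (hs : SUB mu N a) J (hJ1 : (1 <= J)%nat) (hJ : 4 <= INR J*(mu-1))
  T (hT : 4 <= INR T*(mu-1)) (hTN : (N <= T)%nat) P beta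
  (hP : forall m, (P <= m)%nat -> a m <= beta * INR m) (hTP : (P <= T)%nat) D (hD : (D < 2^J*T)%nat) :
  a (2^J*T + D)%nat <= a T + beta*(INR (2^J*T+D) - INR T).
Proof.
  set (g := fun q => (2^q*T + D*q/(J*2^(J-q)))%nat).
  assert (Hg : forall q, (q <= J)%nat -> a (g q) <= a T + beta*(INR (g q) - INR T)).
  { induction q as [|q IHq]; intro hq.
    - unfold g. rewrite Nat.mul_0_r, Nat.Div0.div_0_l.
      replace (2^0*T+0)%nat with T by (simpl; lia). lra.
    - specialize (IHq ltac:(lia)).
      set (Q := (J*2^(J - S q))%nat).
      assert (hQ1 : (1 <= Q)%nat) by (pose proof (pow2_ge1 (J - S q)); unfold Q; nia).
      assert (hQ2 : (J*2^(J-q) = 2*Q)%nat).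
      { unfold Q. replace (J - q)%nat with (S (J - S q)) by lia. rewrite Nat.pow_succ_r'. ring. }
      set (B := (2^q*T)%nat).
      assert (hB : (2^J*T = 2*B*Q / J * J)%nat \/ True) by (right; exact I).
      assert (hJT : (J*(2^J*T) = 2*B*Q)%nat).
      { unfold B, Q. replace J with (S q + (J - S q))%nat at 2 by lia.
        rewrite Nat.pow_add_r, Nat.pow_succ_r'. ring. }
      set (d0 := (D*S q/Q)%nat). set (d1 := (D*q/(2*Q))%nat).
      assert (hg1 : g (S q) = (2*B + d0)%nat).
      { unfold g, d0, Q, B. rewrite Nat.pow_succ_r'. ring. }
      assert (hg0 : g q = (B + d1)%nat).
      { unfold g, d1, B. rewrite hQ2. reflexivity. }
      pose proof (Nat.div_mod (D*S q) Q ltac:(lia)) as E0.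
      pose proof (Nat.mod_upper_bound (D*S q) Q ltac:(lia)) as R0.
      pose proof (Nat.div_mod (D*q) (2*Q) ltac:(lia)) as E1.
      pose proof (Nat.mod_upper_bound (D*q) (2*Q) ltac:(lia)) as R1.
      fold d0 in E0. fold d1 in E1.
      set (r0 := ((D * S q) mod Q)%nat) in *. set (r1 := ((D*q) mod (2*Q))%nat) in *.
      assert (hDSq : (D * S q = D*q + D)%nat) by ring.
      assert (F1 : (2*d1 <= d0)%nat).
      { assert (Q*(2*d1) < Q*(d0+1))%nat by nia. nia. }
      assert (F2 : (J*d0 < 2*J*d1 + 2*J + 2*B)%nat).
      { assert (Q*d0 < 2*Q*d1 + 2*Q + D)%nat by nia.
        assert (J*D < 2*B*Q)%nat by nia.
        assert (Q*(J*d0) < Q*(2*J*d1 + 2*J + 2*B))%nat by nia. nia. }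
      assert (hBT : (T <= B)%nat) by (pose proof (pow2_ge1 q); unfold B; nia).
      set (y := (B + d0 - d1)%nat).
      assert (hsplit : g (S q) = (g q + y)%nat) by (rewrite hg1, hg0; unfold y; lia).
      assert (hyR : INR y = INR B + INR d0 - INR d1).
      { unfold y. rewrite minus_INR by lia. rewrite plus_INR. ring. }
      assert (F1R : 2 * INR d1 <= INR d0).
      { assert (H := le_INR _ _ F1). rewrite mult_INR in H. simpl (INR 2) in H. lra. }
      assert (F2R : INR J * INR d0 < 2 * INR J * INR d1 + 2 * INR J + 2 * INR B).
      { assert (H := lt_INR _ _ F2). rewrite !plus_INR, !mult_INR in H. simpl (INR 2) in H. lra. }
      assert (hBR : INR T <= INR B) by (apply le_INR; lia).
      assert (hJpos : 0 < INR J) by (apply (lt_INR 0); lia).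
      assert (hd1 : 0 <= INR d1) by apply pos_INR.
      assert (hBm : 4 <= INR B * (mu-1)) by nra.
      assert (key : INR J * (mu - 1) * INR B >= 2 * INR B + 2 * INR J).
      { assert (0 <= INR B) by apply pos_INR.
        assert ((INR J*(mu-1) - 4) * INR B >= 0) by nra.
        assert ((INR B*(mu-1) - 4) * INR J >= 0) by nra. nra. }
      assert (hcmp : INR y <= mu * INR (g q)).
      { rewrite hyR, hg0, plus_INR.
        assert (INR J * (INR d0 - 2*INR d1) <= INR J * ((mu-1)*INR B)) by nra.
        assert (INR d0 - 2*INR d1 <= (mu-1)*INR B) by nra. nra. }
      assert (hN1 : (N <= g q)%nat) by (rewrite hg0; lia).
      assert (hle : (g q <= y)%nat) by (rewrite hg0; unfold y; lia).
      assert (hsub := hs (g q) y hN1 hle hcmp).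
      rewrite <- hsplit in hsub.
      assert (hy := hP y ltac:(lia)).
      assert (H : INR (g (S q)) = INR (g q) + INR y) by (rewrite hsplit, plus_INR; ring). rewrite H; nra. }
  specialize (Hg J (le_n _)).
  unfold g in Hg. rewrite Nat.sub_diag in Hg. simpl (2^0)%nat in Hg.
  rewrite Nat.mul_1_r, Nat.div_mul in Hg by lia. exact Hg.
Qed.

Lemma improve mu N a (hmu : 1 < mu) (hN : (1 <= N)%nat) (hs : SUB mu N a) k (hk : (N <= k)%nat)
  J (hJ1 : (1 <= J)%nat) (hJ : 4 <= INR J*(mu-1)) K4 (hK4 : 4 <= INR K4*(mu-1))
  beta (hb : a k / INR k <= beta) P (hP : forall m, (P <= m)%nat -> a m <= beta * INR m) :
  exists P', forall n, (P' <= n)%nat ->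
    a n <= (a k / INR k + (beta - a k / INR k) * (1 - / 2^(S J))) * INR n.
Proof.
  set (t0 := (P + K4 + N)%nat). set (T0 := (2^t0*k)%nat).
  pose proof (pow2_gt t0). pose proof (pow2_ge1 J).
  assert (hT0 : (t0 <= T0)%nat) by (unfold T0; nia).
  exists (2^J*T0)%nat. intros n hn.
  destruct (pow2_bracket (2^J*T0) ltac:(unfold t0 in *; nia) n hn) as [s hs'].
  set (T := (2^s*T0)%nat).
  assert (hTe : (2^s*(2^J*T0) = 2^J*T)%nat) by (unfold T; ring).
  rewrite hTe in hs'.
  pose proof (pow2_ge1 s).
  assert (hTT0 : (T0 <= T)%nat) by (unfold T; nia).
  set (D := (n - 2^J*T)%nat).
  assert (hnD : n = (2^J*T + D)%nat) by (unfold D; lia).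
  assert (hD : (D < 2^J*T)%nat) by (unfold D; lia).
  assert (hTK : INR K4 <= INR T) by (apply le_INR; unfold t0 in *; lia).
  assert (hT : 4 <= INR T*(mu-1)) by nra.
  assert (hc := chain mu N a hmu hs J hJ1 hJ T hT ltac:(unfold t0 in *; lia) P beta hP
                  ltac:(unfold t0 in *; lia) D hD).
  rewrite <- hnD in hc.
  assert (hkpos : 0 < INR k) by (apply (lt_INR 0); lia).
  assert (haT : a T <= a k / INR k * INR T).
  { assert (ET : T = (2^(s+t0)*k)%nat) by (unfold T, T0; rewrite Nat.pow_add_r; ring).
    rewrite ET, INR_pow2k. pose proof (doubling mu N a hmu hs k hk (s+t0)) as Hdb.
    replace (a k / INR k * (2 ^ (s + t0) * INR k)) with (2^(s+t0) * a k) by (field; lra). exact Hdb. }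
  assert (hnT : INR n < 2^(S J) * INR T).
  { assert (Hl := lt_INR _ _ (proj2 hs')). rewrite mult_INR, INR_pow2k in Hl. simpl (INR 2) in Hl.
    simpl pow. lra. }
  assert (hpos : 0 < 2^(S J)) by (apply pow_lt; lra).
  assert (hcn : / 2^(S J) * INR n <= INR T).
  { apply (Rmult_le_reg_l (2^(S J))); auto. rewrite <- Rmult_assoc, Rinv_r by lra. lra. }
  set (al := a k / INR k) in *. set (c := / 2^(S J)) in *.
  assert ((beta - al) * (c * INR n) <= (beta - al) * INR T) by (apply Rmult_le_compat_l; lra).
  nra.
Qed.

Lemma mainlem mu N a (hmu : 1 < mu) (hN : (1 <= N)%nat) (hs : SUB mu N a) k (hk : (N <= k)%nat)
  eta (heta : 0 < eta) :
  exists P, forall n, (P <= n)%nat -> a n / INR n <= a k / INR k + eta.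
Proof.
  destruct (crude mu N a hmu hN hs) as [C [hC0 hC]].
  set (al := a k / INR k).
  set (C' := Rmax C al).
  assert (hC' : forall m, (N <= m)%nat -> a m <= C' * INR m).
  { intros m hm. specialize (hC m hm). pose proof (pos_INR m). pose proof (Rmax_l C al).
    unfold C'. nra. }
  assert (hCal : al <= C') by apply Rmax_r.
  destruct (nat_above (4/(mu-1))) as [J [hJ1 hJ]].
  assert (hJ' : 4 <= INR J * (mu-1)).
  { apply Rmult_le_compat_r with (r := mu-1) in hJ; [|lra]. unfold Rdiv in hJ.
    rewrite Rmult_assoc, Rinv_l in hJ; lra. }
  set (c := / 2^(S J)).
  assert (h2 : 1 < 2^(S J)) by (apply Rlt_pow_R1; [lra|lia]).
  assert (hc0 : 0 < c) by (unfold c; apply Rinv_0_lt_compat; lra).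
  assert (hc1 : c < 1) by (unfold c; rewrite <- Rinv_1; apply Rinv_lt_contravar; lra).
  assert (iter : forall r, exists P, forall m, (P <= m)%nat -> a m <= (al + (C' - al) * (1 - c)^r) * INR m).
  { induction r as [|r [P hP]].
    - exists N. intros m hm. simpl. replace (al + (C' - al) * 1) with C' by ring. auto.
    - assert (hpw : 0 <= (1 - c)^r) by (apply pow_le; lra).
      assert (hb : al <= al + (C' - al) * (1 - c)^r) by nra.
      destruct (improve mu N a hmu hN hs k hk J hJ1 hJ' J hJ' _ hb P hP) as [P' hP'].
      exists P'. intros m hm. specialize (hP' m hm). fold al c in hP'.
      replace (al + (C' - al) * (1 - c) ^ S r) with (al + (al + (C' - al) * (1 - c) ^ r - al) * (1 - c))
        by (simpl; ring). exact hP'. }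
  assert (habs : Rabs (1 - c) < 1) by (rewrite Rabs_right; lra).
  destruct (pow_lt_1_zero (1 - c) habs (eta / (C' - al + 1))) as [R hR].
  { apply Rdiv_lt_0_compat; lra. }
  specialize (hR R (le_n _)). rewrite Rabs_right in hR by (apply Rle_ge, pow_le; lra).
  destruct (iter R) as [P hP].
  exists (Nat.max P 1). intros n hn.
  specialize (hP n ltac:(lia)).
  assert (hn0 : 0 < INR n) by (apply (lt_INR 0); lia).
  assert (hy : (C' - al) * (1 - c)^R <= eta).
  { assert ((C' - al) * (1 - c)^R <= (C' - al) * (eta / (C' - al + 1))) by (apply Rmult_le_compat_l; lra).
    assert ((C' - al) * (eta / (C' - al + 1)) <= eta).
    { unfold Rdiv. apply (Rmult_le_reg_r (C' - al + 1)); [lra|].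
      rewrite Rmult_assoc, (Rmult_assoc eta), Rinv_l by lra. nra. }
    lra. }
  apply (Rmult_le_reg_r (INR n)); auto. unfold Rdiv. rewrite Rmult_assoc, Rinv_l by lra. nra.
Qed.

Theorem theorem3p2 (mu : R) (N : nat) (a : nat -> R)
  (hmu : 1 < mu) (hN : (1 <= N)%nat)
  (hsub : forall n m : nat, (N <= n)%nat -> (n <= m)%nat -> INR m <= mu * INR n ->
            a (n + m)%nat <= a n + a m) :
  (exists L : R, is_inf_ratio a N L /\ Un_cv (fun n => a n / INR n) L) \/
  (inf_ratio_minus_infty a N /\ cv_infty (fun n => - (a n / INR n))).
Proof.
  assert (hs : SUB mu N a) by exact hsub.
  destruct (classic (exists l, forall k, (N <= k)%nat -> l <= a k / INR k)) as [[l hl]|hnb].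
  - left.
    set (E := fun x => exists k, (N <= k)%nat /\ x = - (a k / INR k)).
    assert (hbd : bound E).
    { exists (-l). intros x [k [hk ->]]. specialize (hl k hk). lra. }
    assert (hne : exists x, E x) by (exists (- (a N / INR N)); exists N; split; [lia|reflexivity]).
    destruct (completeness E hbd hne) as [m [hub hlub]].
    exists (-m). split.
    + split.
      * intros k hk. assert (E (- (a k / INR k))) by (exists k; auto). specialize (hub _ H). lra.
      * intros l' hl'. assert (m <= - l').
        { apply hlub. intros x [k [hk ->]]. specialize (hl' k hk). lra. } lra.
    + intros eps heps.
      assert (hex : exists k, (N <= k)%nat /\ a k / INR k < -m + eps/2).
      { apply NNPP. intro hno.
        assert (m <= - (-m + eps/2)).
        { apply hlub. intros x [k [hk ->]].
          destruct (Rlt_le_dec (a k / INR k) (-m + eps/2)) as [h|h].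
          - exfalso. apply hno. exists k. auto.
          - lra. }
        lra. }
      destruct hex as [k [hk hk']].
      destruct (mainlem mu N a hmu hN hs k hk (eps/2) ltac:(lra)) as [P hP].
      exists (Nat.max P N). intros n hn.
      specialize (hP n ltac:(lia)).
      assert (E (- (a n / INR n))) by (exists n; split; [lia|reflexivity]).
      specialize (hub _ H).
      unfold Rdist. rewrite Rabs_right by lra. lra.
  - right.
    assert (hu : forall l, exists k, (N <= k)%nat /\ a k / INR k < l).
    { intro l. apply NNPP. intro hno. apply hnb. exists l. intros k hk.
      destruct (Rlt_le_dec (a k / INR k) l) as [h|h]; auto.
      exfalso. apply hno. exists k. auto. }
    split.
    + exact hu.
    + intro M. destruct (hu (-M - 1)) as [k [hk hk']].
      destruct (mainlem mu N a hmu hN hs k hk (1/2) ltac:(lra)) as [P hP].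
      exists P. intros n hn. specialize (hP n hn). lra.
Qed.
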